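(* Let $\mathcal P$ be a 2-reflex orthostack made of three bricks with canonical contact rectangles and signature $\sqcap_i\sqcap_j$ (for some types $i,j\in\{1,2,3,4\}$) with $j\neq 4$. Then $\mathcal P$ is guarded by a single vertical closed face guard.
   Context: A 2-reflex orthostack is an orthogonal polyhedron with no reflex edge parallel to the vertical ($z$) axis all of whose horizontal cross-sections are simply connected; it is a stack of bricks $B_t=R_t\times[z_{t-1},z_t]$, $t=1,\dots,k$ (bottom to top), $z_0<\dots<z_k$, each $R_t$ an axis-parallel rectangle, $R_t\ne R_{t+1}$. The contact rectangle between $B_t$ and $B_{t+1}$ is $(R_t\cap R_{t+1})\times\{z_t\}$; it is canonical if one of $R_t,R_{t+1}$ is strictly contained in the other and their set difference is connected (so exactly one horizontal face of the orthostack lies in the plane $z=z_t$). The type of a canonical contact rectangle is the number $i\in\{1,2,3,4\}$ of sides of the smaller of the two rectangles that are not contained in the boundary of the larger one (equivalently, the number of edges of the orthostack on its perimeter). The contact is denoted $\sqcup_i$ if $R_t\subsetneq R_{t+1}$ (lower brick's vertical projection inside the upper one's) and $\sqcap_i$ if $R_{t+1}\subsetneq R_t$. The signature is the sequence of these symbols for $t=1,\dots,k-1$, read from bottom to top. A point $x$ is visible to $y$ if the segment $xy$ does not meet the exterior of the polyhedron; a closed face guard is a face including its boundary; it guards the polyhedron if every point is visible from some point of it. A face is vertical if it is parallel to the $z$-axis, horizontal if orthogonal to it. *)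

(* Defs.v *)
From Stdlib Require Import Reals ClassicalEpsilon.
Open Scope R_scope.

Definition pt2 : Type := (R * R)%type.
Record pt3 : Type := P3 { px : R; py : R; pz : R }.

Definition d2 (p q : pt2) : R :=
  (fst p - fst q) ^ 2 + (snd p - snd q) ^ 2.
Definition d3 (p q : pt3) : R :=
  (px p - px q) ^ 2 + (py p - py q) ^ 2 + (pz p - pz q) ^ 2.

Definition openS {T : Type} (d : T -> T -> R) (S : T -> Prop) : Prop :=
  forall p, S p -> exists e, 0 < e /\ forall q, d p q < e -> S q.
Definition interiorS {T : Type} (d : T -> T -> R) (S : T -> Prop) (p : T) : Prop :=
  exists e, 0 < e /\ forall q, d p q < e -> S q.
Definition closureS {T : Type} (d : T -> T -> R) (S : T -> Prop) (p : T) : Prop :=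
  forall e, 0 < e -> exists q, S q /\ d p q < e.
Definition boundaryS {T : Type} (d : T -> T -> R) (S : T -> Prop) (p : T) : Prop :=
  closureS d S p /\ ~ interiorS d S p.
Definition connectedS {T : Type} (d : T -> T -> R) (S : T -> Prop) : Prop :=
  ~ exists U V : T -> Prop,
      openS d U /\ openS d V /\
      (forall p, S p -> U p \/ V p) /\
      (exists p, S p /\ U p) /\ (exists p, S p /\ V p) /\
      (forall p, S p -> U p -> V p -> False).
Definition componentS {T : Type} (d : T -> T -> R) (S C : T -> Prop) : Prop :=
  (exists p, C p) /\ (forall p, C p -> S p) /\ connectedS d C /\
  forall C' : T -> Prop, (forall p, C p -> C' p) -> (forall p, C' p -> S p) ->
    connectedS d C' -> forall p, C' p -> C p.

Record rect : Type := Rect { xlo : R; xhi : R; ylo : R; yhi : R }.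
Definition rect_ok (r : rect) : Prop := xlo r < xhi r /\ ylo r < yhi r.
Definition inRect (r : rect) (p : pt2) : Prop :=
  xlo r <= fst p <= xhi r /\ ylo r <= snd p <= yhi r.

Inductive side : Type := SXlo | SXhi | SYlo | SYhi.
Definition sideSet (r : rect) (s : side) (p : pt2) : Prop :=
  match s with
  | SXlo => fst p = xlo r /\ ylo r <= snd p <= yhi r
  | SXhi => fst p = xhi r /\ ylo r <= snd p <= yhi r
  | SYlo => snd p = ylo r /\ xlo r <= fst p <= xhi r
  | SYhi => snd p = yhi r /\ xlo r <= fst p <= xhi r
  end.

Definition ind (P : Prop) : nat :=
  if excluded_middle_informative P then 1%nat else 0%nat.

Definition side_free (big small : rect) (s : side) : Prop :=
  ~ (forall p, sideSet small s p -> boundaryS d2 (inRect big) p).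

Definition contact_type (big small : rect) : nat :=
  (ind (side_free big small SXlo) + ind (side_free big small SXhi)
   + ind (side_free big small SYlo) + ind (side_free big small SYhi))%nat.

Definition contact_sqcap (low up : rect) (i : nat) : Prop :=
  (forall p, inRect up p -> inRect low p) /\
  (exists p, inRect low p /\ ~ inRect up p) /\
  connectedS d2 (fun p => inRect low p /\ ~ inRect up p) /\
  contact_type low up = i.

Definition stack3 (R1 R2 R3 : rect) (z0 z1 z2 z3 : R) (p : pt3) : Prop :=
  (inRect R1 (px p, py p) /\ z0 <= pz p <= z1) \/
  (inRect R2 (px p, py p) /\ z1 <= pz p <= z2) \/
  (inRect R3 (px p, py p) /\ z2 <= pz p <= z3).

(** points of the plane [H] near which the boundary of [P] coincides with [H]
    (relative interior points of faces lying in [H]) *)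
Definition face_interior (P H : pt3 -> Prop) (p : pt3) : Prop :=
  H p /\ boundaryS d3 P p /\
  exists e, 0 < e /\ forall q, d3 p q < e -> (boundaryS d3 P q <-> H q).

Definition closed_face_in (P H F : pt3 -> Prop) : Prop :=
  exists C, componentS d3 (face_interior P H) C /\
            forall p, F p <-> closureS d3 C p.

Definition vplane (a b c : R) (p : pt3) : Prop := a * px p + b * py p = c.

Definition vertical_closed_face (P F : pt3 -> Prop) : Prop :=
  exists a b c, (a <> 0 \/ b <> 0) /\ closed_face_in P (vplane a b c) F.

Definition visible (P : pt3 -> Prop) (x y : pt3) : Prop :=
  forall l, 0 <= l <= 1 ->
    P (P3 (px x + l * (px y - px x)) (py x + l * (py y - py x))
          (pz x + l * (pz y - pz x))).

Definition guards (P F : pt3 -> Prop) : Prop :=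
  forall p, P p -> exists g, F g /\ visible P g p.

(* Main.v *)
Require Import Defs.
From Stdlib Require Import Reals ClassicalEpsilon.
From Stdlib Require Import Classical Lra Psatz Lia.
Open Scope R_scope.

Definition lerp (x y : pt3) (l : R) : pt3 :=
  P3 (px x + l * (px y - px x)) (py x + l * (py y - py x)) (pz x + l * (pz y - pz x)).
Definition conv (S : pt3 -> Prop) : Prop :=
  forall x y l, S x -> S y -> 0 <= l <= 1 -> S (lerp x y l).

Lemma component_exists {T} (d : T -> T -> R) (S C0 : T -> Prop) :
  (exists p, C0 p) -> (forall p, C0 p -> S p) -> connectedS d C0 ->
  exists C, componentS d S C /\ forall p, C0 p -> C p.
Proof.
  intros [p0 H0] HS Hc.
  set (C := fun p => exists C', (forall x, C0 x -> C' x) /\ (forall x, C' x -> S x)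
                                /\ connectedS d C' /\ C' p).
  assert (HC0 : forall p, C0 p -> C p).
  { intros p Hp. exists C0. split; [auto|split; [auto|split; auto]]. }
  exists C. split; [|exact HC0].
  split; [exists p0; auto|].
  split. { intros p [C' [_ [HC'S [_ Hp]]]]; auto. }
  split.
  - intros [U [V [HU [HV [Hcov [[p [Cp Up]] [[q [Cq Vq]] Hdis]]]]]]].
    destruct (Hcov p0 (HC0 p0 H0)) as [Up0|Vp0].
    + destruct Cq as [C' [Hsub [HS' [Hcn Hq]]]].
      apply Hcn. exists U, V. repeat split; auto.
      * intros x Hx. apply Hcov. exists C'. auto.
      * exists p0. auto.
      * exists q. auto.
      * intros x Hx. apply Hdis. exists C'. auto.
    + destruct Cp as [C' [Hsub [HS' [Hcn Hp]]]].
      apply Hcn. exists U, V. repeat split; auto.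
      * intros x Hx. apply Hcov. exists C'. auto.
      * exists p. auto.
      * exists p0. auto.
      * intros x Hx. apply Hdis. exists C'. auto.
  - intros C' Hsub HC'S Hconn p Hp. exists C'. repeat split; auto.
Qed.

Lemma small_sq e D u m : 0 < e -> 0 <= D -> m = Rmin 1 (e / (2 * (D + 1))) ->
  - m <= u <= m -> u ^ 2 * D < e.
Proof.
  intros He HD Hm Hu.
  assert (m <= 1) by (subst; apply Rmin_l).
  assert (m <= e / (2 * (D + 1))) by (subst; apply Rmin_r).
  assert (m * (2 * (D + 1)) <= e).
  { apply Rmult_le_reg_r with (/ (2 * (D + 1))).
    apply Rinv_0_lt_compat; lra.
    rewrite Rmult_assoc, Rinv_r by lra. lra. }
  assert (u ^ 2 <= m) by nra.
  nra.
Qed.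

Lemma d3_lerp p q s t : d3 (lerp p q s) (lerp p q t) = (t - s) ^ 2 * d3 p q.
Proof. unfold d3, lerp; simpl; ring. Qed.

Lemma lerp0 p q : lerp p q 0 = p.
Proof. destruct p; unfold lerp; simpl; f_equal; ring. Qed.
Lemma lerp1 p q : lerp p q 1 = q.
Proof. destruct q; unfold lerp; simpl; f_equal; ring. Qed.

Lemma convex_connected S : conv S -> connectedS d3 S.
Proof.
  intros HS [U [V [HU [HV [Hcov [[p [Sp Up]] [[q [Sq Vq]] Hdis]]]]]]].
  set (E := fun t => 0 <= t <= 1 /\ U (lerp p q t)).
  assert (HD : 0 <= d3 p q) by (unfold d3; pose proof (pow2_ge_0 (px p - px q)); pose proof (pow2_ge_0 (py p - py q)); pose proof (pow2_ge_0 (pz p - pz q)); lra).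
  destruct (completeness E) as [s [Hub Hlub]].
  { exists 1. intros t [Ht _]. lra. }
  { exists 0. split; [lra|]. rewrite lerp0; auto. }
  assert (Hs0 : 0 <= s) by (apply Hub; split; [lra|]; rewrite lerp0; auto).
  assert (Hs1 : s <= 1) by (apply Hlub; intros t [Ht _]; lra).
  assert (HSs : S (lerp p q s)) by (apply HS; auto).
  destruct (Hcov _ HSs) as [Us|Vs].
  - destruct (HU _ Us) as [e [He Hball]].
    destruct (Req_dec s 1) as [->|Hs1'].
    + rewrite lerp1 in Us. apply (Hdis q); auto.
    + set (m := Rmin 1 (e / (2 * (d3 p q + 1)))).
      assert (Hm : 0 < m).
      { unfold m. apply Rmin_glb_lt; [lra|]. apply Rdiv_lt_0_compat; lra. }
      set (t := s + Rmin (1 - s) m).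
      assert (0 < Rmin (1 - s) m) by (apply Rmin_glb_lt; lra).
      assert (Rmin (1 - s) m <= 1 - s) by apply Rmin_l.
      assert (Rmin (1 - s) m <= m) by apply Rmin_r.
      assert (Et : E t).
      { split; [unfold t; lra|]. apply Hball. rewrite d3_lerp.
        apply (small_sq e (d3 p q) (t - s) m); auto. unfold t; lra. }
      specialize (Hub t Et). unfold t in Hub. lra.
  - destruct (HV _ Vs) as [e [He Hball]].
    set (m := Rmin 1 (e / (2 * (d3 p q + 1)))).
    assert (Hm : 0 < m).
    { unfold m. apply Rmin_glb_lt; [lra|]. apply Rdiv_lt_0_compat; lra. }
    destruct (classic (exists t, E t /\ s - m < t)) as [[t [Et Ht]]|Hno].
    + assert (t <= s) by (apply Hub; auto).
      destruct Et as [Ht01 Ut].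
      apply (Hdis (lerp p q t)); [apply HS; auto; lra | auto |].
      apply Hball. rewrite d3_lerp.
      apply (small_sq e (d3 p q) (t - s) m); auto. lra.
    + assert (s <= s - m); [|lra].
      apply Hlub. intros t Et. destruct (Rle_dec t (s - m)); auto.
      exfalso. apply Hno. exists t. split; auto. lra.
Qed.

Lemma sq_tri u v w : (u - w) ^ 2 <= 2 * (u - v) ^ 2 + 2 * (v - w) ^ 2.
Proof. pose proof (pow2_ge_0 (u - 2 * v + w)). nra. Qed.

Lemma d3_tri p q q' r : d3 p q < r / 4 -> d3 q q' < r / 4 -> d3 p q' < r.
Proof.
  unfold d3. intros H1 H2.
  pose proof (sq_tri (px p) (px q) (px q')).
  pose proof (sq_tri (py p) (py q) (py q')).
  pose proof (sq_tri (pz p) (pz q) (pz q')). lra.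
Qed.

Lemma d3_phi a b q q' : a * a + b * b = 1 ->
  (a * px q' + b * py q' - (a * px q + b * py q)) ^ 2 <= d3 q q'.
Proof.
  intros Hab. unfold d3.
  pose proof (pow2_ge_0 (a * (py q' - py q) - b * (px q' - px q))).
  pose proof (pow2_ge_0 (pz q - pz q')).
  assert (Hid : (a * px q' + b * py q' - (a * px q + b * py q)) ^ 2
     + (a * (py q' - py q) - b * (px q' - px q)) ^ 2
     = (a * a + b * b) * ((px q - px q') ^ 2 + (py q - py q') ^ 2)) by ring.
  rewrite Hab in Hid. lra.
Qed.

Lemma sq_pos x : x <> 0 -> 0 < x ^ 2.
Proof.
  intros H. destruct (Rtotal_order x 0) as [H1|[H1|H1]]; [|contradiction|apply pow_lt; auto].
  replace (x ^ 2) with ((- x) ^ 2) by ring. apply pow_lt; lra.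
Qed.

Lemma sq_le u v : 0 <= v <= u -> v ^ 2 <= u ^ 2.
Proof. intros H. apply pow_incr. lra. Qed.

Section Loc.
Variables (P : pt3 -> Prop) (a b c : R) (p : pt3) (r : R).
Hypothesis Hab : a * a + b * b = 1.
Hypothesis Hr : 0 < r.
Hypothesis Hloc : forall q, d3 p q < r -> (P q <-> a * px q + b * py q >= c).

Lemma bd_iff q : d3 p q < r / 4 -> (boundaryS d3 P q <-> a * px q + b * py q = c).
Proof.
  intros Hq. set (f := fun q => a * px q + b * py q). fold (f q).
  destruct (Rtotal_order (f q) c) as [Hlt|[Heq|Hgt]].
  - split; [|lra]. intros [Hcl _].
    set (e := Rmin (r / 4) ((f q - c) ^ 2)).
    assert (He : 0 < e).
    { apply Rmin_glb_lt; [lra|]. apply sq_pos. lra. }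
    destruct (Hcl e He) as [q' [Pq' Hd]].
    assert (Hd1 : d3 q q' < r / 4) by (eapply Rlt_le_trans; [exact Hd|apply Rmin_l]).
    assert (Hd2 : d3 q q' < (f q - c) ^ 2) by (eapply Rlt_le_trans; [exact Hd|apply Rmin_r]).
    pose proof (d3_phi a b q q' Hab). fold (f q) (f q') in H.
    apply (Hloc q' (d3_tri _ _ _ _ Hq Hd1)) in Pq'. fold (f q') in Pq'.
    assert (Hx : (c - f q) ^ 2 <= (f q' - f q) ^ 2) by (apply sq_le; lra).
    replace ((f q - c) ^ 2) with ((c - f q) ^ 2) in Hd2 by ring. lra.
  - split; [lra|]. intros _. split.
    + intros e He. exists q. split.
      * apply Hloc; [lra|]. fold (f q); lra.
      * unfold d3. replace (px q - px q) with 0 by ring.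
        replace (py q - py q) with 0 by ring. replace (pz q - pz q) with 0 by ring.
        simpl. lra.
    + intros [e [He Hint]].
      set (m := Rmin 1 (Rmin e (r / 4))).
      assert (Hm : 0 < m) by (apply Rmin_glb_lt; [lra|apply Rmin_glb_lt; lra]).
      assert (m <= 1) by apply Rmin_l.
      assert (m <= Rmin e (r / 4)) by apply Rmin_r.
      assert (Rmin e (r/4) <= e) by apply Rmin_l.
      assert (Rmin e (r/4) <= r / 4) by apply Rmin_r.
      set (t := m / 2).
      set (q' := P3 (px q - t * a) (py q - t * b) (pz q)).
      assert (Hd : d3 q q' = t ^ 2).
      { unfold d3, q'; simpl. replace (pz q - pz q) with 0 by ring.
        transitivity (t ^ 2 * (a * a + b * b)); [ring|]. rewrite Hab; ring. }
      assert (Ht2 : t ^ 2 < m) by (unfold t; simpl; nra).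
      assert (Pq' : P q').
      { apply Hint. rewrite Hd. lra. }
      apply (Hloc q') in Pq'; [|apply (d3_tri _ q); auto; rewrite Hd; lra].
      unfold q' in Pq'; simpl in Pq'.
      assert (a * (px q - t * a) + b * (py q - t * b) = f q - t * (a * a + b * b))
        by (unfold f; ring).
      rewrite Hab in H3. unfold t in *. lra.
  - split; [|lra]. intros [_ Hni]. exfalso. apply Hni.
    set (e := Rmin (r / 4) ((f q - c) ^ 2)).
    assert (He : 0 < e).
    { apply Rmin_glb_lt; [lra|]. apply sq_pos. lra. }
    exists e. split; auto. intros q' Hd.
    assert (Hd1 : d3 q q' < r / 4) by (eapply Rlt_le_trans; [exact Hd|apply Rmin_l]).
    assert (Hd2 : d3 q q' < (f q - c) ^ 2) by (eapply Rlt_le_trans; [exact Hd|apply Rmin_r]).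
    pose proof (d3_phi a b q q' Hab). fold (f q) (f q') in H.
    apply (Hloc q' (d3_tri _ _ _ _ Hq Hd1)). fold (f q').
    assert (f q' >= c \/ f q' < c) as [|] by lra; auto.
    assert (Hx : (f q - c) ^ 2 <= (f q - f q') ^ 2).
    { apply sq_le; lra. } exfalso.
    replace ((f q' - f q) ^ 2) with ((f q - f q') ^ 2) in H by ring.
    lra.
Qed.

Lemma local_face : a * px p + b * py p = c -> face_interior P (vplane a b c) p.
Proof.
  intros Hp. split; [exact Hp|]. split.
  - apply (proj2 (bd_iff p ltac:(unfold d3; replace (px p - px p) with 0 by ring;
       replace (py p - py p) with 0 by ring; replace (pz p - pz p) with 0 by ring; simpl; lra))).
    exact Hp.
  - exists (r / 4). split; [lra|]. intros q Hq. unfold vplane. apply bd_iff; auto.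
Qed.
End Loc.

Lemma gen_guard (P : pt3 -> Prop) a b c (C0 B1 B2 B3 : pt3 -> Prop) :
  a * a + b * b = 1 -> conv C0 -> (exists p, C0 p) ->
  (forall p, C0 p -> a * px p + b * py p = c /\
     exists r, 0 < r /\ forall q, d3 p q < r -> (P q <-> a * px q + b * py q >= c)) ->
  (forall p, P p -> B1 p \/ B2 p \/ B3 p) ->
  (forall p, B1 p -> P p) -> (forall p, B2 p -> P p) -> (forall p, B3 p -> P p) ->
  conv B1 -> conv B2 -> conv B3 ->
  (exists g, closureS d3 C0 g /\ B1 g) ->
  (exists g, closureS d3 C0 g /\ B2 g) ->
  (exists g, closureS d3 C0 g /\ B3 g) ->
  exists F, vertical_closed_face P F /\ guards P F.
Proof.
  intros Hab HC0 Hne Hloc Hcov HP1 HP2 HP3 Hc1 Hc2 Hc3 [g1 [G1 I1]] [g2 [G2 I2]] [g3 [G3 I3]].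
  destruct (component_exists d3 (face_interior P (vplane a b c)) C0 Hne)
    as [C [HC Hsub]].
  { intros p Hp. destruct (Hloc p Hp) as [Hp1 [r [Hr Hl]]].
    apply (local_face P a b c p r); auto. }
  { apply convex_connected; auto. }
  assert (Hcl : forall g, closureS d3 C0 g -> closureS d3 C g).
  { intros g Hg e He. destruct (Hg e He) as [q [Hq Hd]]. exists q; auto. }
  exists (closureS d3 C). split.
  - exists a, b, c. split.
    + destruct (Req_dec a 0); [right; intro; subst; lra | left; auto].
    + exists C. split; [auto| tauto].
  - intros p Pp. destruct (Hcov p Pp) as [Bp|[Bp|Bp]].
    + exists g1. split; [auto|]. intros l Hl. apply HP1. exact (Hc1 g1 p l I1 Bp Hl).
    + exists g2. split; [auto|]. intros l Hl. apply HP2. exact (Hc2 g2 p l I2 Bp Hl).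
    + exists g3. split; [auto|]. intros l Hl. apply HP3. exact (Hc3 g3 p l I3 Bp Hl).
Qed.

Lemma lerp_ge lo u v l : lo <= u -> lo <= v -> 0 <= l <= 1 -> lo <= u + l * (v - u).
Proof. intros. assert (0 <= (1-l)*(u-lo)) by (apply Rmult_le_pos; lra).
  assert (0 <= l*(v-lo)) by (apply Rmult_le_pos; lra). lra. Qed.
Lemma lerp_le hi u v l : u <= hi -> v <= hi -> 0 <= l <= 1 -> u + l * (v - u) <= hi.
Proof. intros. assert (0 <= (1-l)*(hi-u)) by (apply Rmult_le_pos; lra).
  assert (0 <= l*(hi-v)) by (apply Rmult_le_pos; lra). lra. Qed.
Lemma lerp_gt lo u v l : lo < u -> lo < v -> 0 <= l <= 1 -> lo < u + l * (v - u).
Proof. intros. destruct (Req_dec l 1). subst; lra.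
  assert (0 < (1-l)*(u-lo)) by (apply Rmult_lt_0_compat; lra).
  assert (0 <= l*(v-lo)) by (apply Rmult_le_pos; lra). lra. Qed.
Lemma lerp_lt hi u v l : u < hi -> v < hi -> 0 <= l <= 1 -> u + l * (v - u) < hi.
Proof. intros. destruct (Req_dec l 1). subst; lra.
  assert (0 < (1-l)*(hi-u)) by (apply Rmult_lt_0_compat; lra).
  assert (0 <= l*(hi-v)) by (apply Rmult_le_pos; lra). lra. Qed.
Lemma lerp_eq w u v l : u = w -> v = w -> u + l * (v - u) = w.
Proof. intros; subst; ring. Qed.

Definition brick (Rr : rect) (za zb : R) (p : pt3) : Prop :=
  inRect Rr (px p, py p) /\ za <= pz p <= zb.

Lemma brick_conv Rr za zb : conv (brick Rr za zb).
Proof.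
  intros x y l [[[? ?] [? ?]] [? ?]] [[[? ?] [? ?]] [? ?]] Hl; unfold brick, inRect, lerp in *; simpl in *.
  repeat split;
  first [apply lerp_ge; auto | apply lerp_le; auto].
Qed.

Lemma closure_z (C0 : pt3 -> Prop) x y z zm : z < zm ->
  (forall t, 0 < t < zm - z -> C0 (P3 x y (z + t))) -> closureS d3 C0 (P3 x y z).
Proof.
  intros Hz HC e He.
  set (m := Rmin (zm - z) (Rmin 1 e)).
  assert (0 < m) by (apply Rmin_glb_lt; [lra|apply Rmin_glb_lt; lra]).
  assert (m <= zm - z) by apply Rmin_l.
  assert (m <= Rmin 1 e) by apply Rmin_r.
  assert (Rmin 1 e <= 1) by apply Rmin_l.
  assert (Rmin 1 e <= e) by apply Rmin_r.
  exists (P3 x y (z + m / 2)). split; [apply HC; lra|].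
  unfold d3; simpl. nra.
Qed.

Lemma closure_self (C0 : pt3 -> Prop) p : C0 p -> closureS d3 C0 p.
Proof.
  intros H e He. exists p. split; auto. unfold d3.
  replace (px p - px p) with 0 by ring. replace (py p - py p) with 0 by ring.
  replace (pz p - pz p) with 0 by ring. simpl. lra.
Qed.

Lemma sq_bound u S g : u ^ 2 <= S -> S < g * g -> 0 < g -> - g < u < g.
Proof.
  intros H1 H2 H3. simpl in H1.
  split; apply Rnot_le_lt; intro; nra.
Qed.

Lemma d3_coord p q g : d3 p q < g * g -> 0 < g ->
  px p - g < px q < px p + g /\ py p - g < py q < py p + g /\ pz p - g < pz q < pz p + g.
Proof.
  intros H Hg. unfold d3 in H.
  pose proof (pow2_ge_0 (px p - px q)). pose proof (pow2_ge_0 (py p - py q)).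
  pose proof (pow2_ge_0 (pz p - pz q)).
  assert (A := sq_bound (px p - px q) (d3 p q) g ltac:(unfold d3; lra) ltac:(unfold d3; lra) Hg).
  assert (B := sq_bound (py p - py q) (d3 p q) g ltac:(unfold d3; lra) ltac:(unfold d3; lra) Hg).
  assert (C := sq_bound (pz p - pz q) (d3 p q) g ltac:(unfold d3; lra) ltac:(unfold d3; lra) Hg).
  lra.
Qed.

Lemma min5 a1 a2 a3 a4 a5 : 0 < a1 -> 0 < a2 -> 0 < a3 -> 0 < a4 -> 0 < a5 ->
  exists g, 0 < g /\ g <= a1 /\ g <= a2 /\ g <= a3 /\ g <= a4 /\ g <= a5.
Proof.
  intros. exists (Rmin (Rmin (Rmin a1 a2) (Rmin a3 a4)) a5).
  pose proof (Rmin_l (Rmin (Rmin a1 a2) (Rmin a3 a4)) a5).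
  pose proof (Rmin_r (Rmin (Rmin a1 a2) (Rmin a3 a4)) a5).
  pose proof (Rmin_l (Rmin a1 a2) (Rmin a3 a4)).
  pose proof (Rmin_r (Rmin a1 a2) (Rmin a3 a4)).
  pose proof (Rmin_l a1 a2). pose proof (Rmin_r a1 a2).
  pose proof (Rmin_l a3 a4). pose proof (Rmin_r a3 a4).
  assert (0 < Rmin (Rmin (Rmin a1 a2) (Rmin a3 a4)) a5).
  { repeat apply Rmin_glb_lt; auto. }
  repeat split; lra.
Qed.

Lemma corners (R2 R3 : rect) : rect_ok R3 -> (forall p, inRect R3 p -> inRect R2 p) ->
  xlo R2 <= xlo R3 /\ xhi R3 <= xhi R2 /\ ylo R2 <= ylo R3 /\ yhi R3 <= yhi R2.
Proof.
  intros [H1 H2] H.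
  destruct (H (xlo R3, ylo R3)) as [[? ?] [? ?]]; [unfold inRect; simpl; lra|].
  destruct (H (xhi R3, yhi R3)) as [[? ?] [? ?]]; [unfold inRect; simpl; lra|].
  simpl in *. lra.
Qed.

Section Cases.
Variables (R1 R2 R3 : rect) (z0 z1 z2 z3 : R).
Let m := (ylo R3 + yhi R3) / 2.
Let n := (xlo R3 + xhi R3) / 2.

Definition Hyps (E : Prop) : Prop :=
  rect_ok R1 -> rect_ok R2 -> rect_ok R3 ->
  z0 < z1 -> z1 < z2 -> z2 < z3 ->
  (forall p, inRect R2 p -> inRect R1 p) -> (forall p, inRect R3 p -> inRect R2 p) ->
  E -> exists F : pt3 -> Prop,
    vertical_closed_face (stack3 R1 R2 R3 z0 z1 z2 z3) F /\
    guards (stack3 R1 R2 R3 z0 z1 z2 z3) F.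

Lemma case_xlo : Hyps (xlo R3 = xlo R2).
Proof.
  unfold Hyps.
  intros ok1 ok2 ok3 h01 h12 h23 H12 H23 Heq.
  destruct ok3 as [ok3a ok3b].
  destruct (corners R2 R3 (conj ok3a ok3b) H23) as [c1 [c2 [c3 c4]]].
  apply (gen_guard (stack3 R1 R2 R3 z0 z1 z2 z3) 1 0 (xlo R3)
    (fun p => px p = xlo R3 /\ (ylo R3 < py p < yhi R3) /\ (z1 < pz p < z3))
           (brick R1 z0 z1) (brick R2 z1 z2) (brick R3 z2 z3)).
  - lra.
  - intros x y l [? [[? ?] [? ?]]] [? [[? ?] [? ?]]] Hl; unfold lerp; simpl.
    split; [apply lerp_eq; auto|].
    split; (split; [apply lerp_gt; auto | apply lerp_lt; auto]).
  - exists (P3 (xlo R3) m ((z1+z3)/2)). unfold m. simpl. lra.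
  - intros p [Hp1 [[Hp2 Hp3] [Hp4 Hp5]]].
    split; [lra|].
    destruct (min5 (py p - ylo R3) (yhi R3 - py p) (pz p - z1) (z3 - pz p) (xhi R3 - xlo R3))
              as [gg [Hg [? [? [? [? ?]]]]]]; [lra|lra|lra|lra|lra|].
    exists (gg * gg); split; [nra|].
    intros q Hq; destruct (d3_coord p q gg Hq Hg) as [[? ?] [[? ?] [? ?]]].
    unfold stack3, inRect; simpl; split.
    + intros [[[[? ?] [? ?]] [? ?]]|[[[[? ?] [? ?]] [? ?]]|[[[? ?] [? ?]] [? ?]]]]; lra.
    + intros; destruct (Rle_dec (pz q) z2);
      [right; left | right; right]; repeat split; lra.
  - intros p Hp; exact Hp.
  - intros p Hp; left; exact Hp.
  - intros p Hp; right; left; exact Hp.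
  - intros p Hp; right; right; exact Hp.
  - apply brick_conv.
  - apply brick_conv.
  - apply brick_conv.
  - exists (P3 (xlo R3) m z1); split.
    + apply (closure_z _ _ _ _ z3); [lra|]; intros t Ht; unfold m; simpl; repeat split; lra.
    + split; [apply H12; apply H23; unfold inRect, m; simpl; lra | simpl; lra].
  - exists (P3 (xlo R3) m ((z1 + z2) / 2)); split.
    + apply closure_self; unfold m; simpl; repeat split; lra.
    + split; [apply H23; unfold inRect, m; simpl; lra | simpl; lra].
  - exists (P3 (xlo R3) m ((z2 + z3) / 2)); split.
    + apply closure_self; unfold m; simpl; repeat split; lra.
    + split; [unfold inRect, m; simpl; lra | simpl; lra].
Qed.
Lemma case_xhi : Hyps (xhi R3 = xhi R2).
Proof.
  unfold Hyps.
  intros ok1 ok2 ok3 h01 h12 h23 H12 H23 Heq.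
  destruct ok3 as [ok3a ok3b].
  destruct (corners R2 R3 (conj ok3a ok3b) H23) as [c1 [c2 [c3 c4]]].
  apply (gen_guard (stack3 R1 R2 R3 z0 z1 z2 z3) (-1) 0 (- xhi R3)
    (fun p => px p = xhi R3 /\ (ylo R3 < py p < yhi R3) /\ (z1 < pz p < z3))
           (brick R1 z0 z1) (brick R2 z1 z2) (brick R3 z2 z3)).
  - lra.
  - intros x y l [? [[? ?] [? ?]]] [? [[? ?] [? ?]]] Hl; unfold lerp; simpl.
    split; [apply lerp_eq; auto|].
    split; (split; [apply lerp_gt; auto | apply lerp_lt; auto]).
  - exists (P3 (xhi R3) m ((z1+z3)/2)). unfold m. simpl. lra.
  - intros p [Hp1 [[Hp2 Hp3] [Hp4 Hp5]]].
    split; [lra|].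
    destruct (min5 (py p - ylo R3) (yhi R3 - py p) (pz p - z1) (z3 - pz p) (xhi R3 - xlo R3))
              as [gg [Hg [? [? [? [? ?]]]]]]; [lra|lra|lra|lra|lra|].
    exists (gg * gg); split; [nra|].
    intros q Hq; destruct (d3_coord p q gg Hq Hg) as [[? ?] [[? ?] [? ?]]].
    unfold stack3, inRect; simpl; split.
    + intros [[[[? ?] [? ?]] [? ?]]|[[[[? ?] [? ?]] [? ?]]|[[[? ?] [? ?]] [? ?]]]]; lra.
    + intros; destruct (Rle_dec (pz q) z2);
      [right; left | right; right]; repeat split; lra.
  - intros p Hp; exact Hp.
  - intros p Hp; left; exact Hp.
  - intros p Hp; right; left; exact Hp.
  - intros p Hp; right; right; exact Hp.
  - apply brick_conv.
  - apply brick_conv.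
  - apply brick_conv.
  - exists (P3 (xhi R3) m z1); split.
    + apply (closure_z _ _ _ _ z3); [lra|]; intros t Ht; unfold m; simpl; repeat split; lra.
    + split; [apply H12; apply H23; unfold inRect, m; simpl; lra | simpl; lra].
  - exists (P3 (xhi R3) m ((z1 + z2) / 2)); split.
    + apply closure_self; unfold m; simpl; repeat split; lra.
    + split; [apply H23; unfold inRect, m; simpl; lra | simpl; lra].
  - exists (P3 (xhi R3) m ((z2 + z3) / 2)); split.
    + apply closure_self; unfold m; simpl; repeat split; lra.
    + split; [unfold inRect, m; simpl; lra | simpl; lra].
Qed.
Lemma case_ylo : Hyps (ylo R3 = ylo R2).
Proof.
  unfold Hyps.
  intros ok1 ok2 ok3 h01 h12 h23 H12 H23 Heq.
  destruct ok3 as [ok3a ok3b].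
  destruct (corners R2 R3 (conj ok3a ok3b) H23) as [c1 [c2 [c3 c4]]].
  apply (gen_guard (stack3 R1 R2 R3 z0 z1 z2 z3) 0 1 (ylo R3)
    (fun p => py p = ylo R3 /\ (xlo R3 < px p < xhi R3) /\ (z1 < pz p < z3))
           (brick R1 z0 z1) (brick R2 z1 z2) (brick R3 z2 z3)).
  - lra.
  - intros x y l [? [[? ?] [? ?]]] [? [[? ?] [? ?]]] Hl; unfold lerp; simpl.
    split; [apply lerp_eq; auto|].
    split; (split; [apply lerp_gt; auto | apply lerp_lt; auto]).
  - exists (P3 n (ylo R3) ((z1+z3)/2)). unfold n. simpl. lra.
  - intros p [Hp1 [[Hp2 Hp3] [Hp4 Hp5]]].
    split; [lra|].
    destruct (min5 (px p - xlo R3) (xhi R3 - px p) (pz p - z1) (z3 - pz p) (yhi R3 - ylo R3))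
              as [gg [Hg [? [? [? [? ?]]]]]]; [lra|lra|lra|lra|lra|].
    exists (gg * gg); split; [nra|].
    intros q Hq; destruct (d3_coord p q gg Hq Hg) as [[? ?] [[? ?] [? ?]]].
    unfold stack3, inRect; simpl; split.
    + intros [[[[? ?] [? ?]] [? ?]]|[[[[? ?] [? ?]] [? ?]]|[[[? ?] [? ?]] [? ?]]]]; lra.
    + intros; destruct (Rle_dec (pz q) z2);
      [right; left | right; right]; repeat split; lra.
  - intros p Hp; exact Hp.
  - intros p Hp; left; exact Hp.
  - intros p Hp; right; left; exact Hp.
  - intros p Hp; right; right; exact Hp.
  - apply brick_conv.
  - apply brick_conv.
  - apply brick_conv.
  - exists (P3 n (ylo R3) z1); split.
    + apply (closure_z _ _ _ _ z3); [lra|]; intros t Ht; unfold n; simpl; repeat split; lra.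
    + split; [apply H12; apply H23; unfold inRect, n; simpl; lra | simpl; lra].
  - exists (P3 n (ylo R3) ((z1 + z2) / 2)); split.
    + apply closure_self; unfold n; simpl; repeat split; lra.
    + split; [apply H23; unfold inRect, n; simpl; lra | simpl; lra].
  - exists (P3 n (ylo R3) ((z2 + z3) / 2)); split.
    + apply closure_self; unfold n; simpl; repeat split; lra.
    + split; [unfold inRect, n; simpl; lra | simpl; lra].
Qed.
Lemma case_yhi : Hyps (yhi R3 = yhi R2).
Proof.
  unfold Hyps.
  intros ok1 ok2 ok3 h01 h12 h23 H12 H23 Heq.
  destruct ok3 as [ok3a ok3b].
  destruct (corners R2 R3 (conj ok3a ok3b) H23) as [c1 [c2 [c3 c4]]].
  apply (gen_guard (stack3 R1 R2 R3 z0 z1 z2 z3) 0 (-1) (- yhi R3)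
    (fun p => py p = yhi R3 /\ (xlo R3 < px p < xhi R3) /\ (z1 < pz p < z3))
           (brick R1 z0 z1) (brick R2 z1 z2) (brick R3 z2 z3)).
  - lra.
  - intros x y l [? [[? ?] [? ?]]] [? [[? ?] [? ?]]] Hl; unfold lerp; simpl.
    split; [apply lerp_eq; auto|].
    split; (split; [apply lerp_gt; auto | apply lerp_lt; auto]).
  - exists (P3 n (yhi R3) ((z1+z3)/2)). unfold n. simpl. lra.
  - intros p [Hp1 [[Hp2 Hp3] [Hp4 Hp5]]].
    split; [lra|].
    destruct (min5 (px p - xlo R3) (xhi R3 - px p) (pz p - z1) (z3 - pz p) (yhi R3 - ylo R3))
              as [gg [Hg [? [? [? [? ?]]]]]]; [lra|lra|lra|lra|lra|].
    exists (gg * gg); split; [nra|].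
    intros q Hq; destruct (d3_coord p q gg Hq Hg) as [[? ?] [[? ?] [? ?]]].
    unfold stack3, inRect; simpl; split.
    + intros [[[[? ?] [? ?]] [? ?]]|[[[[? ?] [? ?]] [? ?]]|[[[? ?] [? ?]] [? ?]]]]; lra.
    + intros; destruct (Rle_dec (pz q) z2);
      [right; left | right; right]; repeat split; lra.
  - intros p Hp; exact Hp.
  - intros p Hp; left; exact Hp.
  - intros p Hp; right; left; exact Hp.
  - intros p Hp; right; right; exact Hp.
  - apply brick_conv.
  - apply brick_conv.
  - apply brick_conv.
  - exists (P3 n (yhi R3) z1); split.
    + apply (closure_z _ _ _ _ z3); [lra|]; intros t Ht; unfold n; simpl; repeat split; lra.
    + split; [apply H12; apply H23; unfold inRect, n; simpl; lra | simpl; lra].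
  - exists (P3 n (yhi R3) ((z1 + z2) / 2)); split.
    + apply closure_self; unfold n; simpl; repeat split; lra.
    + split; [apply H23; unfold inRect, n; simpl; lra | simpl; lra].
  - exists (P3 n (yhi R3) ((z2 + z3) / 2)); split.
    + apply closure_self; unfold n; simpl; repeat split; lra.
    + split; [unfold inRect, n; simpl; lra | simpl; lra].
Qed.
End Cases.

Lemma ind_true (P : Prop) : P -> Defs.ind P = 1%nat.
Proof. intros H. unfold Defs.ind. destruct (excluded_middle_informative P); [reflexivity|contradiction]. Qed.

Lemma not4 big small : contact_type big small <> 4%nat ->
  exists s, forall p, sideSet small s p -> boundaryS Defs.d2 (inRect big) p.
Proof.
  intros H.
  destruct (classic (side_free big small SXlo)) as [h1|h1];
    [|exists SXlo; intros p; apply NNPP; intro Hn; apply h1; intros Hf; apply Hn; intro; auto].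
  destruct (classic (side_free big small SXhi)) as [h2|h2];
    [|exists SXhi; intros p; apply NNPP; intro Hn; apply h2; intros Hf; apply Hn; intro; auto].
  destruct (classic (side_free big small SYlo)) as [h3|h3];
    [|exists SYlo; intros p; apply NNPP; intro Hn; apply h3; intros Hf; apply Hn; intro; auto].
  destruct (classic (side_free big small SYhi)) as [h4|h4];
    [|exists SYhi; intros p; apply NNPP; intro Hn; apply h4; intros Hf; apply Hn; intro; auto].
  exfalso. apply H. unfold contact_type.
  rewrite (ind_true _ h1), (ind_true _ h2), (ind_true _ h3), (ind_true _ h4). reflexivity.
Qed.

Lemma interior_rect (r : rect) x y : xlo r < x < xhi r -> ylo r < y < yhi r ->
  interiorS Defs.d2 (inRect r) (x, y).
Proof.
  intros Hx Hy.
  destruct (min5 (x - xlo r) (xhi r - x) (y - ylo r) (yhi r - y) 1) as [g [Hg [? [? [? [? ?]]]]]]; try lra.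
  exists (g * g). split; [nra|]. intros q Hq. unfold Defs.d2 in Hq; simpl in Hq.
  pose proof (pow2_ge_0 (x - fst q)). pose proof (pow2_ge_0 (y - snd q)).
  assert (A := sq_bound (x - fst q) _ g ltac:(apply Rle_refl) ltac:(lra) Hg).
  assert (B := sq_bound (y - snd q) _ g ltac:(apply Rle_refl) ltac:(lra) Hg).
  unfold inRect. lra.
Qed.

Theorem mainTheorem7 (R1 R2 R3 : rect) (z0 z1 z2 z3 : R) (i j : nat) :
  rect_ok R1 -> rect_ok R2 -> rect_ok R3 ->
  z0 < z1 -> z1 < z2 -> z2 < z3 ->
  (1 <= i <= 4)%nat -> (1 <= j <= 4)%nat ->
  contact_sqcap R1 R2 i ->
  contact_sqcap R2 R3 j ->
  j <> 4%nat ->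
  exists F : pt3 -> Prop,
    vertical_closed_face (stack3 R1 R2 R3 z0 z1 z2 z3) F /\
    guards (stack3 R1 R2 R3 z0 z1 z2 z3) F.
Proof.
  intros ok1 ok2 ok3 h01 h12 h23 _ _ [H12 _] [H23 [_ [_ Ht]]] Hj.
  assert (Hn : contact_type R2 R3 <> 4%nat) by (rewrite Ht; exact Hj).
  destruct (not4 R2 R3 Hn) as [s Hs].
  destruct ok3 as [a3 b3].
  destruct (corners R2 R3 (conj a3 b3) H23) as [c1 [c2 [c3 c4]]].
  set (m := (ylo R3 + yhi R3) / 2). set (n := (xlo R3 + xhi R3) / 2).
  destruct s.
  - assert (E : xlo R3 = xlo R2).
    { destruct (Req_dec (xlo R3) (xlo R2)) as [|Hne]; auto. exfalso.
      destruct (Hs (xlo R3, m)) as [_ Hni]; [simpl; unfold m; lra|].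
      apply Hni. apply interior_rect; unfold m; lra. }
    apply (case_xlo R1 R2 R3 z0 z1 z2 z3); auto. split; auto.
  - assert (E : xhi R3 = xhi R2).
    { destruct (Req_dec (xhi R3) (xhi R2)) as [|Hne]; auto. exfalso.
      destruct (Hs (xhi R3, m)) as [_ Hni]; [simpl; unfold m; lra|].
      apply Hni. apply interior_rect; unfold m; lra. }
    apply (case_xhi R1 R2 R3 z0 z1 z2 z3); auto. split; auto.
  - assert (E : ylo R3 = ylo R2).
    { destruct (Req_dec (ylo R3) (ylo R2)) as [|Hne]; auto. exfalso.
      destruct (Hs (n, ylo R3)) as [_ Hni]; [simpl; unfold n; lra|].
      apply Hni. apply interior_rect; unfold n; lra. }
    apply (case_ylo R1 R2 R3 z0 z1 z2 z3); auto. split; auto.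
  - assert (E : yhi R3 = yhi R2).
    { destruct (Req_dec (yhi R3) (yhi R2)) as [|Hne]; auto. exfalso.
      destruct (Hs (n, yhi R3)) as [_ Hni]; [simpl; unfold n; lra|].
      apply Hni. apply interior_rect; unfold n; lra. }
    apply (case_yhi R1 R2 R3 z0 z1 z2 z3); auto. split; auto.
Qed.
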